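(* (Provably in $\mathsf{Z}^-_{\mathrm{FTM}\omega}$.) Let $F$ be a class-function whose domain $D=\mathrm{dom}F$ is a set, and let $R=F[D]=\{F(x):x\in D\}$. Then $F$ and $R$ are sets in each of the following two cases: (1) $R$ is transitive; (2) there is a set $Y$ such that every element of $R$ is a subset of $Y$.
   Context: $\mathsf{Z}^-_{\mathrm{FTM}\omega}$ is Zermelo set theory without Power Set and Choice (Extensionality, Pairing, Union, Infinity, Regularity, Separation) plus: (FC) every set $X$ has a superset $Y$ such that every finite $x\subseteq Y$ belongs to $Y$; (TS) every set has a transitive superset; (MC) every set binary relation $A$ that is well-founded and extensional admits a transitive set $X$ and a bijection $\eta$ from its field onto $X$ with $jAk\iff\eta(j)\in\eta(k)$; (Count) every set admits an injection into $\omega$. A class-function is a class definable by an $\in$-formula (parameters allowed) that consists of ordered pairs and is functional. *)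

(* Defs.v *)
(* Semantic rendering of "provably in Z^-_{FTM omega}":
   the conclusion holds in every model (M, E) of the theory, for every
   class-function definable by a first-order formula with parameters.
   By Goedel's completeness theorem this is equivalent to provability. *)

Inductive formula : Type :=
| FMem : nat -> nat -> formula
| FEq  : nat -> nat -> formula
| FBot : formula
| FImp : formula -> formula -> formula
| FAll : formula -> formula.            (* ∀ binds variable 0 *)

Definition scons {M : Type} (x : M) (env : nat -> M) : nat -> M :=
  fun n => match n with 0 => x | S k => env k end.

Section Model.
Variable M : Type.
Variable E : M -> M -> Prop.

Fixpoint sat (env : nat -> M) (p : formula) : Prop :=
  match p with
  | FMem i j => E (env i) (env j)
  | FEq i j => env i = env j
  | FBot => False
  | FImp p q => sat env p -> sat env q
  | FAll p => forall x : M, sat (scons x env) p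
  end.

Definition subset (a b : M) : Prop := forall u, E u a -> E u b.
Definition transitive (a : M) : Prop := forall y u, E y a -> E u y -> E u a.
Definition is_empty (e : M) : Prop := forall u, ~ E u e.
Definition is_single (a w : M) : Prop := forall u, E u w <-> u = a.
Definition is_upair (a b w : M) : Prop := forall u, E u w <-> (u = a \/ u = b).
Definition is_pair (a b p : M) : Prop :=
  forall w, E w p <-> (is_single a w \/ is_upair a b w).
Definition pair_in (f a b : M) : Prop := exists p, E p f /\ is_pair a b p.
Definition is_succ (x s : M) : Prop := forall u, E u s <-> (E u x \/ u = x).
Definition inductive (I : M) : Prop :=
  (forall e, is_empty e -> E e I) /\
  (forall x s, E x I -> is_succ x s -> E s I).
Definition is_omega (w : M) : Prop :=
  inductive w /\ forall I, inductive I -> subset w I.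

Definition is_fun_on (f : M) (P : M -> Prop) (b : M) : Prop :=
  (forall p, E p f -> exists x y, is_pair x y p /\ P x /\ E y b) /\
  (forall x, P x -> exists y, pair_in f x y) /\
  (forall x y1 y2, pair_in f x y1 -> pair_in f x y2 -> y1 = y2).
Definition is_inj_on (f : M) (P : M -> Prop) (b : M) : Prop :=
  is_fun_on f P b /\
  (forall x1 x2 y, pair_in f x1 y -> pair_in f x2 y -> x1 = x2).
Definition is_bij_on (f : M) (P : M -> Prop) (b : M) : Prop :=
  is_inj_on f P b /\ (forall y, E y b -> exists x, pair_in f x y).

Definition is_finite (x : M) : Prop :=
  exists w n f, is_omega w /\ E n w /\ is_bij_on f (fun u => E u x) n.

Definition is_relation (A : M) : Prop :=
  forall p, E p A -> exists j k, is_pair j k p.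
Definition in_field (A j : M) : Prop :=
  exists k, pair_in A j k \/ pair_in A k j.
Definition rel_wf (A : M) : Prop :=
  forall s, (forall u, E u s -> in_field A u) -> (exists u, E u s) ->
    exists m, E m s /\ forall u, E u s -> ~ pair_in A u m.
Definition rel_ext (A : M) : Prop :=
  forall j k, in_field A j -> in_field A k ->
    (forall u, pair_in A u j <-> pair_in A u k) -> j = k.

Definition Ax_ext : Prop := forall a b, (forall x, E x a <-> E x b) -> a = b.
Definition Ax_pair : Prop := forall a b, exists c, is_upair a b c.
Definition Ax_union : Prop :=
  forall a, exists u, forall x, E x u <-> exists y, E y a /\ E x y.
Definition Ax_inf : Prop :=
  exists I, (exists e, is_empty e /\ E e I) /\
            (forall x, E x I -> exists s, is_succ x s /\ E s I).
Definition Ax_reg : Prop :=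
  forall a, (exists x, E x a) -> exists y, E y a /\ forall u, E u y -> ~ E u a.
Definition Ax_sep : Prop :=
  forall (phi : formula) (env : nat -> M) (a : M),
    exists b, forall x, E x b <-> (E x a /\ sat (scons x env) phi).
Definition Ax_FC : Prop :=
  forall X, exists Y, subset X Y /\
    forall x, is_finite x -> subset x Y -> E x Y.
Definition Ax_TS : Prop := forall X, exists T, subset X T /\ transitive T.
Definition Ax_MC : Prop :=
  forall A, is_relation A -> rel_wf A -> rel_ext A ->
    exists X eta, transitive X /\ is_bij_on eta (in_field A) X /\
      forall j k yj yk, in_field A j -> in_field A k ->
        pair_in eta j yj -> pair_in eta k yk ->
        (pair_in A j k <-> E yj yk).
Definition Ax_count : Prop :=
  forall a w, is_omega w -> exists f, is_inj_on f (fun u => E u a) w.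

Definition Z_FTM_omega : Prop :=
  Ax_ext /\ Ax_pair /\ Ax_union /\ Ax_inf /\ Ax_reg /\ Ax_sep /\
  Ax_FC /\ Ax_TS /\ Ax_MC /\ Ax_count.

Definition class_of (phi : formula) (env : nat -> M) : M -> Prop :=
  fun z => sat (scons z env) phi.

Definition is_class_function (C : M -> Prop) : Prop :=
  (forall z, C z -> exists x y, is_pair x y z) /\
  (forall z1 z2 x y1 y2, C z1 -> C z2 -> is_pair x y1 z1 -> is_pair x y2 z2 ->
     y1 = y2).

Definition cdom (C : M -> Prop) (x : M) : Prop :=
  exists y z, C z /\ is_pair x y z.
Definition crange (C : M -> Prop) (y : M) : Prop :=
  exists x z, C z /\ is_pair x y z.

Definition is_set_class (P : M -> Prop) : Prop :=
  exists s, forall x, E x s <-> P x.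

End Model.

(* Main.v *)
Require Import Defs.
From Stdlib Require Import Classical.

Section Machinery.
Variable M : Type.
Variable E : M -> M -> Prop.

Lemma sat_ext : forall f (e e' : nat -> M), (forall n, e n = e' n) ->
  (sat M E e f <-> sat M E e' f).
Proof.
  induction f; intros e e' H; simpl.
  - rewrite !H; tauto.
  - rewrite !H; tauto.
  - tauto.
  - rewrite (IHf1 e e' H), (IHf2 e e' H); tauto.
  - split; intros H1 x; [rewrite <- (IHf (scons x e) (scons x e'))|rewrite (IHf (scons x e) (scons x e'))]; auto;
    intros [|n]; simpl; auto.
Qed.

Definition up (r : nat -> nat) (n : nat) : nat :=
  match n with 0 => 0 | S k => S (r k) end.

Fixpoint ren (r : nat -> nat) (f : formula) : formula :=
  match f with
  | FMem i j => FMem (r i) (r j)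
  | FEq i j => FEq (r i) (r j)
  | FBot => FBot
  | FImp p q => FImp (ren r p) (ren r q)
  | FAll p => FAll (ren (up r) p)
  end.

Lemma sat_ren : forall f r (e : nat -> M),
  sat M E e (ren r f) <-> sat M E (fun n => e (r n)) f.
Proof.
  induction f; intros r e; simpl; try tauto.
  - rewrite IHf1, IHf2; tauto.
  - split; intros H x; specialize (H x).
    + rewrite IHf in H. rewrite sat_ext; [exact H|]. intros [|n]; reflexivity.
    + rewrite IHf. rewrite sat_ext; [exact H|]. intros [|n]; reflexivity.
Qed.

Definition Def (P : (nat -> M) -> Prop) := exists f, forall e, P e <-> sat M E e f.

Lemma Def_ext P : Def P -> forall e e', (forall n, e n = e' n) -> (P e <-> P e').
Proof. intros [f Hf] e e' H. rewrite !Hf. apply sat_ext; auto. Qed.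

Lemma def_mem i j : Def (fun e => E (e i) (e j)).
Proof. exists (FMem i j); simpl; tauto. Qed.
Lemma def_eq i j : Def (fun e => e i = e j).
Proof. exists (FEq i j); simpl; tauto. Qed.
Lemma def_false : Def (fun _ => False).
Proof. exists FBot; simpl; tauto. Qed.
Lemma def_true : Def (fun _ => True).
Proof. exists (FImp FBot FBot); simpl; tauto. Qed.
Lemma def_imp P Q : Def P -> Def Q -> Def (fun e => P e -> Q e).
Proof. intros [f Hf] [g Hg]; exists (FImp f g); intro e; simpl; rewrite Hf, Hg; tauto. Qed.
Lemma def_not P : Def P -> Def (fun e => ~ P e).
Proof. intros [f Hf]; exists (FImp f FBot); intro e; simpl; rewrite Hf; tauto. Qed.
Lemma def_and P Q : Def P -> Def Q -> Def (fun e => P e /\ Q e).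
Proof. intros [f Hf] [g Hg]; exists (FImp (FImp f (FImp g FBot)) FBot); intro e; simpl;
  rewrite Hf, Hg; tauto. Qed.
Lemma def_or P Q : Def P -> Def Q -> Def (fun e => P e \/ Q e).
Proof. intros [f Hf] [g Hg]; exists (FImp (FImp f FBot) g); intro e; simpl;
  rewrite Hf, Hg; split; [tauto|]. intro H. destruct (classic (sat M E e f)); tauto. Qed.
Lemma def_iff P Q : Def P -> Def Q -> Def (fun e => P e <-> Q e).
Proof. intros HP HQ. 
  destruct (def_and _ _ (def_imp _ _ HP HQ) (def_imp _ _ HQ HP)) as [f Hf].
  exists f; intro e; rewrite <- Hf; tauto. Qed.
Lemma def_all (Q : M -> (nat -> M) -> Prop) :
  Def (fun e => Q (e 0) (fun n => e (S n))) -> Def (fun e => forall x, Q x e).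
Proof. intros [f Hf]; exists (FAll f); intro e; simpl. split; intros H x.
  - apply (Hf (scons x e)). exact (H x).
  - apply (Hf (scons x e)) in H. exact H.
Qed.
Lemma def_ex (Q : M -> (nat -> M) -> Prop) :
  Def (fun e => Q (e 0) (fun n => e (S n))) -> Def (fun e => exists x, Q x e).
Proof. intros [f Hf]; exists (FImp (FAll (FImp f FBot)) FBot); intro e; simpl. split.
  - intros [x Hx] H. apply (H x). apply (Hf (scons x e)). exact Hx.
  - intros H. apply NNPP. intro H1. apply H. intros x Hx. apply H1. exists x.
    apply (Hf (scons x e)) in Hx. exact Hx.
Qed.
Lemma def_comp P (h : (nat -> M) -> (nat -> M)) (r : nat -> nat) :
  Def P -> (forall e n, h e n = e (r n)) -> Def (fun e => P (h e)).
Proof. intros [f Hf] Hh. exists (ren r f). intro e. rewrite sat_ren, Hf.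
  apply sat_ext. intro n; apply Hh. Qed.
Lemma def_sat f a (s : nat -> nat) :
  Def (fun e => sat M E (scons (e a) (fun k => e (s k))) f).
Proof.
  apply (def_comp (fun e => sat M E e f) _ (fun n => match n with 0 => a | S k => s k end)).
  - exists f; tauto.
  - intros e [|n]; reflexivity.
Qed.
Lemma def_V2 PV a b (s : nat -> nat) : Def PV ->
  Def (fun e => PV (scons (e a) (scons (e b) (fun k => e (s k))))).
Proof.
  intro H.
  apply (def_comp PV _ (fun n => match n with 0 => a | 1 => b | S (S k) => s k end)); auto.
  intros e [|[|n]]; reflexivity.
Qed.

Lemma def_empty i : Def (fun e => is_empty M E (e i)).
Proof. unfold is_empty. apply def_all; cbv beta. apply def_not, def_mem. Qed.

Ltac defin0 := first [ apply def_mem | apply def_eq | apply def_false | apply def_true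
  | apply def_empty | apply def_sat | apply def_not | apply def_and | apply def_or
  | apply def_iff | apply def_ex | apply def_all | apply def_imp ].
Ltac defin := repeat (cbv beta; defin0).

Lemma def_single i j : Def (fun e => is_single M E (e i) (e j)).
Proof. unfold is_single. defin. Qed.
Lemma def_upair i j k : Def (fun e => is_upair M E (e i) (e j) (e k)).
Proof. unfold is_upair. defin. Qed.
Lemma def_pair i j k : Def (fun e => is_pair M E (e i) (e j) (e k)).
Proof. unfold is_pair. repeat (cbv beta; first [apply def_single | apply def_upair | defin0]). Qed.
Lemma def_pair_in i j k : Def (fun e => pair_in M E (e i) (e j) (e k)).
Proof. unfold pair_in. repeat (cbv beta; first [apply def_pair | defin0]). Qed.
Lemma def_succ i j : Def (fun e => is_succ M E (e i) (e j)).
Proof. unfold is_succ. defin. Qed.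
Lemma def_in_field i j : Def (fun e => in_field M E (e i) (e j)).
Proof. unfold in_field. repeat (cbv beta; first [apply def_pair_in | defin0]). Qed.
End Machinery.

Ltac defin0 := first [ apply def_mem | apply def_eq | apply def_false | apply def_true
  | apply def_empty | apply def_single | apply def_upair | apply def_pair | apply def_pair_in
  | apply def_succ | apply def_in_field
  | apply def_sat | apply def_not | apply def_and | apply def_or
  | apply def_iff | apply def_ex | apply def_all | apply def_imp ].
Ltac defin := repeat (cbv beta; defin0).

Section Sets.
Variable M : Type.
Variable E : M -> M -> Prop.
Variable HZ : Z_FTM_omega M E.

Lemma ext a b : (forall x, E x a <-> E x b) -> a = b.
Proof. destruct HZ as [H _]. apply H. Qed.

Lemma ex_upair a b : exists c, is_upair M E a b c.
Proof. destruct HZ as [_ [H _]]. apply H. Qed.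

Lemma ex_single a : exists c, is_single M E a c.
Proof. destruct (ex_upair a a) as [c Hc]. exists c. intro u. rewrite (Hc u). tauto. Qed.

Lemma ex_empty : exists z, is_empty M E z.
Proof. destruct HZ as [_ [_ [_ [[I [[z [Hz _]] _]] _]]]]. eauto. Qed.

Lemma ex_union2 a b : exists c, forall x, E x c <-> E x a \/ E x b.
Proof.
  destruct HZ as [_ [_ [HU _]]].
  destruct (ex_upair a b) as [p Hp]. destruct (HU p) as [c Hc]. exists c.
  intro x. rewrite Hc. split.
  - intros [y [Hy Hxy]]. apply (Hp y) in Hy. destruct Hy; subst; tauto.
  - intros [H|H]; [exists a|exists b]; rewrite (Hp _); tauto.
Qed.

Lemma sep P (HP : Def M E P) e a : exists b, forall x, E x b <-> E x a /\ P (scons x e).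
Proof.
  destruct HZ as [_ [_ [_ [_ [_ [HS _]]]]]]. destruct HP as [f Hf].
  destruct (HS f e a) as [b Hb]. exists b. intro x. rewrite Hb, Hf. tauto.
Qed.

Lemma single_eq a w w' : is_single M E a w -> is_single M E a w' -> w = w'.
Proof. intros H H'. apply ext. intro x. rewrite (H x), (H' x). tauto. Qed.
Lemma upair_eq a b w w' : is_upair M E a b w -> is_upair M E a b w' -> w = w'.
Proof. intros H H'. apply ext. intro x. rewrite (H x), (H' x). tauto. Qed.
Lemma empty_eq w w' : is_empty M E w -> is_empty M E w' -> w = w'.
Proof. intros H H'. apply ext. intro x. split; intro h; [destruct (H _ h)|destruct (H' _ h)]. Qed.
Lemma succ_eq a w w' : is_succ M E a w -> is_succ M E a w' -> w = w'.
Proof. intros H H'. apply ext. intro x. rewrite (H x), (H' x). tauto. Qed.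

Lemma ex_pair a b : exists p, is_pair M E a b p.
Proof.
  destruct (ex_single a) as [s Hs]. destruct (ex_upair a b) as [u Hu].
  destruct (ex_upair s u) as [p Hp]. exists p. intro w. rewrite (Hp w). split.
  - intros [-> | ->]; auto.
  - intros [H|H]; [left; apply (single_eq a); auto|right; apply (upair_eq a b); auto].
Qed.

Lemma ex_succ x : exists s, is_succ M E x s.
Proof.
  destruct (ex_single x) as [s Hs]. destruct (ex_union2 x s) as [c Hc].
  exists c. intro u. rewrite (Hc u), (Hs u). tauto.
Qed.

Lemma pair_inj a b a' b' p : is_pair M E a b p -> is_pair M E a' b' p -> a = a' /\ b = b'.
Proof.
  intros Hp Hp'.
  destruct (ex_single a) as [s Hs].
  assert (Ha : a = a').
  { assert (E s p) by (apply Hp; auto).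
    apply Hp' in H. destruct H as [H|H].
    - assert (E a' s) by (apply H; auto). apply Hs in H0; auto.
    - assert (E a' s) by (apply H; auto). apply Hs in H0; auto. }
  subst a'. split; auto.
  destruct (ex_upair a b) as [u Hu].
  assert (Hup : E u p) by (apply Hp; auto).
  apply Hp' in Hup. destruct Hup as [H|H].
  - assert (Hb : b = a) by (apply H, Hu; auto). subst b.
    destruct (ex_upair a b') as [u' Hu'].
    assert (E u' p) by (apply Hp'; auto). apply Hp in H0.
    assert (E b' u') by (apply Hu'; auto).
    destruct H0 as [H0|H0]; apply H0 in H1; [auto|destruct H1; auto].
  - assert (E b u) by (apply Hu; auto). apply H in H0. destruct H0 as [-> | ->]; auto.
    assert (E b' u) by (apply H; auto). apply Hu in H0. destruct H0; auto.
Qed.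

Lemma upair_inj x x' t n : is_upair M E x t n -> is_upair M E x' t n -> x = x'.
Proof.
  intros H H'. assert (E x n) by (apply H; auto). apply H' in H0.
  destruct H0 as [H0| ->]; auto.
  assert (E x' n) by (apply H'; auto). apply H in H0. destruct H0; auto.
Qed.

Lemma not_self a : ~ E a a.
Proof.
  intro Haa. destruct HZ as [_ [_ [_ [_ [HR _]]]]].
  destruct (ex_single a) as [s Hs].
  destruct (HR s) as [y [Hy Hmin]]. exists a; apply Hs; auto.
  apply Hs in Hy. subst y. apply (Hmin a Haa). apply Hs; auto.
Qed.

Lemma ex_omega : exists w, is_omega M E w.
Proof.
  destruct HZ as [_ [_ [_ [[I [[z [Hz HzI]] HI]] _]]]].
  assert (HP : Def M E (fun e => forall J, inductive M E J -> E (e 0) J)).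
  { unfold inductive. defin. }
  destruct (sep _ HP (fun _ => z) I) as [w Hw].
  exists w. split; [split|].
  - intros z' Hz'. apply Hw. rewrite (empty_eq z' z); auto. split; auto.
    intros J [HJ _]. apply HJ; auto.
  - intros x s Hx Hs. apply Hw in Hx. destruct Hx as [HxI Hx].
    destruct (HI x HxI) as [s' [Hs' Hs'I]]. rewrite (succ_eq x s s'); auto.
    apply Hw. split; auto. intros J HJ. apply (proj2 HJ x s'); auto.
  - intros J HJ x Hx. apply Hw in Hx. apply (proj2 Hx); auto.
Qed.

Lemma omega_ind w (Hw : is_omega M E w) P (HP : Def M E P) e :
  (forall z, is_empty M E z -> P (scons z e)) ->
  (forall x s, E x w -> P (scons x e) -> is_succ M E x s -> P (scons s e)) ->
  forall n, E n w -> P (scons n e).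
Proof.
  intros H0 HS.
  destruct (sep _ HP e w) as [b Hb].
  assert (inductive M E b).
  { destruct Hw as [[Hw0 HwS] _]. split.
    - intros z Hz. apply Hb. auto.
    - intros x s Hx Hs. apply Hb in Hx. apply Hb. destruct Hx. split; eauto. }
  intros n Hn. apply (proj2 Hw) in H. apply H in Hn. apply Hb in Hn. tauto.
Qed.

End Sets.

Section Omega.
Variable M : Type.
Variable E : M -> M -> Prop.
Variable HZ : Z_FTM_omega M E.
Variable w : M.
Variable Hw : is_omega M E w.

Lemma om_zero n : E n w -> is_empty M E n \/ exists u, E u n /\ is_empty M E u.
Proof.
  apply (omega_ind M E HZ w Hw (fun e => is_empty M E (e 0) \/ exists u, E u (e 0) /\ is_empty M E u)
    ltac:(defin) (fun _ => w)); simpl.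
  - auto.
  - intros x s Hx [H|[u [Hu Hue]]] Hs.
    + right. exists x. split; auto. apply Hs; auto.
    + right. exists u. split; auto. apply Hs; auto.
Qed.

Lemma om_L m : E m w -> forall n s, E n m -> is_succ M E n s -> E s m \/ s = m.
Proof.
  apply (omega_ind M E HZ w Hw (fun e => forall n s, E n (e 0) -> is_succ M E n s -> E s (e 0) \/ s = e 0)
    ltac:(defin) (fun _ => w)); simpl.
  - intros z Hz n s Hn. destruct (Hz n Hn).
  - intros x s Hx IH Hs n t Hn Ht. apply Hs in Hn. destruct Hn as [Hn| ->].
    + left. apply Hs. destruct (IH n t Hn Ht) as [H| ->]; auto.
    + right. apply (succ_eq M E HZ x); auto.
Qed.

Lemma om_tri n m : E n w -> E m w -> E m n \/ m = n \/ E n m.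
Proof.
  intros Hn. revert m.
  apply (omega_ind M E HZ w Hw (fun e => forall m, E m (e 1) -> E m (e 0) \/ m = e 0 \/ E (e 0) m)
    ltac:(defin) (fun _ => w)); simpl; auto.
  - intros z Hz m Hm. destruct (om_zero m Hm) as [H|[u [Hu Hue]]].
    + right; left. apply (empty_eq M E HZ); auto.
    + right; right. rewrite (empty_eq M E HZ z u); auto.
  - intros x s Hx IH Hs m Hm. destruct (IH m Hm) as [H|[H|H]].
    + left. apply Hs; auto.
    + left. apply Hs; auto.
    + destruct (om_L m Hm x s H Hs); auto.
Qed.

End Omega.

Section Fin.
Variable M : Type.
Variable E : M -> M -> Prop.
Variable HZ : Z_FTM_omega M E.

Lemma pin f x y p q : (forall r, E r f <-> r = p \/ r = q) -> pair_in M E f x y ->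
  is_pair M E x y p \/ is_pair M E x y q.
Proof. intros Hf [r [Hr Hp]]. apply Hf in Hr. destruct Hr; subst; auto. Qed.

Lemma upair_finite a b u : is_upair M E a b u -> is_finite M E u.
Proof.
  intros Hu.
  destruct (ex_omega M E HZ) as [w Hw].
  destruct (ex_empty M E HZ) as [z Hz].
  destruct (ex_succ M E HZ z) as [o Ho].
  destruct (ex_succ M E HZ o) as [t Ht].
  assert (Hzw : E z w) by (apply (proj1 (proj1 Hw)); auto).
  assert (How : E o w) by (apply (proj2 (proj1 Hw)) with z; auto).
  assert (Htw : E t w) by (apply (proj2 (proj1 Hw)) with o; auto).
  assert (Hzo : E z o) by (apply Ho; auto).
  assert (Ho' : forall y, E y o <-> y = z).
  { intro y. rewrite (Ho y). split; [intros [H|H]; auto; destruct (Hz _ H)|auto]. }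
  assert (Hzneo : z <> o) by (intro H; rewrite <- H in Hzo; apply (Hz z); auto).
  destruct (ex_pair M E HZ a z) as [p Hp].
  destruct (ex_pair M E HZ b o) as [q Hq].
  destruct (classic (a = b)) as [Hab|Hab].
  - subst b. destruct (ex_upair M E HZ p p) as [f Hf].
    exists w, o, f. split; auto. split; auto.
    assert (Hf' : forall r, E r f <-> r = p \/ r = p) by exact Hf.
    assert (Hu' : forall x, E x u <-> x = a) by (intro x; rewrite (Hu x); tauto).
    assert (Hpa : pair_in M E f a z) by (exists p; split; auto; apply Hf; auto).
    split; [split; [split; [|split]|]|].
    + intros r Hr. apply Hf in Hr. exists a, z. destruct Hr; subst; (split; [auto|split; [apply Hu'|apply Ho']; auto]).


    + intros x Hx. apply Hu' in Hx. subst. eauto.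
    + intros x y1 y2 H1 H2. apply (pin _ _ _ _ _ Hf') in H1. apply (pin _ _ _ _ _ Hf') in H2.
      assert (y1 = z) by (destruct H1 as [H1|H1]; apply (pair_inj M E HZ _ _ _ _ _ H1 Hp)).
      assert (y2 = z) by (destruct H2 as [H2|H2]; apply (pair_inj M E HZ _ _ _ _ _ H2 Hp)).
      congruence.
    + intros x1 x2 y H1 H2. apply (pin _ _ _ _ _ Hf') in H1. apply (pin _ _ _ _ _ Hf') in H2.
      assert (x1 = a) by (destruct H1 as [H1|H1]; apply (pair_inj M E HZ _ _ _ _ _ H1 Hp)).
      assert (x2 = a) by (destruct H2 as [H2|H2]; apply (pair_inj M E HZ _ _ _ _ _ H2 Hp)).
      congruence.
    + intros y Hy. apply Ho' in Hy. subst. eauto.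
  - destruct (ex_upair M E HZ p q) as [f Hf].
    exists w, t, f. split; auto. split; auto.
    assert (Hf' : forall r, E r f <-> r = p \/ r = q) by exact Hf.
    assert (Hu' : forall x, E x u <-> x = a \/ x = b) by exact Hu.
    assert (Ht' : forall y, E y t <-> y = z \/ y = o).
    { intro y. rewrite (Ht y), (Ho' y). tauto. }
    assert (Hpa : pair_in M E f a z) by (exists p; split; auto; apply Hf; auto).
    assert (Hqb : pair_in M E f b o) by (exists q; split; auto; apply Hf; auto).
    assert (Hpi : forall x y, pair_in M E f x y -> (x = a /\ y = z) \/ (x = b /\ y = o)).
    { intros x y H. apply (pin _ _ _ _ _ Hf') in H. destruct H as [H|H].
      - left. apply (pair_inj M E HZ _ _ _ _ _ H Hp).
      - right. apply (pair_inj M E HZ _ _ _ _ _ H Hq). }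
    split; [split; [split; [|split]|]|].
    + intros r Hr. apply Hf' in Hr. destruct Hr; subst.
      * exists a, z. split; auto. split; [apply Hu'|apply Ht']; auto.
      * exists b, o. split; auto. split; [apply Hu'|apply Ht']; auto.
    + intros x Hx. apply Hu' in Hx. destruct Hx; subst; eauto.
    + intros x y1 y2 H1 H2. apply Hpi in H1. apply Hpi in H2.
      destruct H1 as [[]|[]]; destruct H2 as [[]|[]]; subst; try congruence.
    + intros x1 x2 y H1 H2. apply Hpi in H1. apply Hpi in H2.
      destruct H1 as [[]|[]]; destruct H2 as [[]|[]]; subst; try congruence.
    + intros y Hy. apply Ht' in Hy. destruct Hy; subst; eauto.
Qed.

Lemma ex_pclosed X : exists Y, subset M E X Y /\
  (forall a b u, E a Y -> E b Y -> is_upair M E a b u -> E u Y).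
Proof.
  destruct HZ as [_ [_ [_ [_ [_ [_ [HFC _]]]]]]].
  destruct (HFC X) as [Y [HXY HY]]. exists Y. split; auto.
  intros a b u Ha Hb Hu. apply HY.
  - apply (upair_finite a b u Hu).
  - intros v Hv. apply Hu in Hv. destruct Hv; subst; auto.
Qed.

Lemma pclosed_pair Y : (forall a b u, E a Y -> E b Y -> is_upair M E a b u -> E u Y) ->
  forall a b p, E a Y -> E b Y -> is_pair M E a b p -> E p Y.
Proof.
  intros HY a b p Ha Hb Hp.
  destruct (ex_single M E HZ a) as [s Hs]. destruct (ex_upair M E HZ a b) as [u Hu].
  assert (Hsu : is_upair M E s u p).
  { intro r. rewrite (Hp r). split.
    - intros [H|H]; [left; apply (single_eq M E HZ a)|right; apply (upair_eq M E HZ a b)]; auto.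
    - intros [-> | ->]; auto. }
  apply (HY s u); auto.
  - apply (HY a a); auto. intro r. rewrite (Hs r). tauto.
  - apply (HY a b); auto.
Qed.

End Fin.

Section Collapse.
Variable M : Type.
Variable E : M -> M -> Prop.
Variable HZ : Z_FTM_omega M E.
Variable PV : (nat -> M) -> Prop.
Variable HPV : Def M E PV.
Variable e0 : nat -> M.
Variable N : M.
Definition V n v := PV (scons n (scons v e0)).
Variable Vtot : forall n, E n N -> exists v, V n v.
Variable Vfun : forall n v1 v2, E n N -> V n v1 -> V n v2 -> v1 = v2.
Variable Vinj : forall n1 n2 v, E n1 N -> E n2 N -> V n1 v -> V n2 v -> n1 = n2.
Variable Vdown : forall n v u, E n N -> V n v -> E u v -> exists m, E m N /\ V m u.

Ltac defv := repeat (cbv beta; first [apply (def_V2 M E PV _ _ _ HPV) | defin0]).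

Definition R m n := E m N /\ E n N /\ exists vm vn, V m vm /\ V n vn /\ E vm vn.

Lemma collapse : exists X, forall n v, E n N -> V n v -> E v X.
Proof.
  destruct (ex_pclosed M E HZ N) as [Y [HNY HY]].
  assert (HPA : Def M E (fun e => exists m n vm vn, E m (e 1) /\ E n (e 1) /\ is_pair M E m n (e 0) /\
     PV (scons m (scons vm (fun k => e (2+k)))) /\ PV (scons n (scons vn (fun k => e (2+k)))) /\ E vm vn)).
  { defv. }
  destruct (sep M E HZ _ HPA (scons N e0) Y) as [A HA].
  assert (HA' : forall p, E p A <-> E p Y /\ exists m n vm vn, E m N /\ E n N /\ is_pair M E m n p /\
     V m vm /\ V n vn /\ E vm vn) by exact HA.
  clear HA HPA.
  assert (pairA : forall m n, pair_in M E A m n <-> R m n).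
  { intros m n. split.
    - intros [p [Hp Hpair]]. apply HA' in Hp. destruct Hp as [_ [m' [n' [vm [vn [Hm [Hn [Hp' [H1 [H2 H3]]]]]]]]]].
      destruct (pair_inj M E HZ _ _ _ _ _ Hpair Hp'). subst. split; auto. split; auto. eauto.
    - intros [Hm [Hn [vm [vn [H1 [H2 H3]]]]]]. destruct (ex_pair M E HZ m n) as [p Hp].
      exists p. split; auto. apply HA'. split.
      + apply (pclosed_pair M E HZ Y HY m n); auto.
      + exists m, n, vm, vn. auto 10. }
  assert (fieldN : forall j, in_field M E A j -> E j N).
  { intros j [k [H|H]]; apply pairA in H; destruct H as [H1 [H2 _]]; auto. }
  assert (Hrel : is_relation M E A).
  { intros p Hp. apply HA' in Hp. destruct Hp as [_ [m [n [_ [_ [_ [_ [H _]]]]]]]]. eauto. }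
  assert (Hwf : rel_wf M E A).
  { intros s Hs [u0 Hu0].
    destruct (Vtot u0 (fieldN _ (Hs _ Hu0))) as [v0 Hv0].
    destruct (ex_single M E HZ v0) as [sv Hsv].
    destruct HZ as [_ [_ [_ [_ [HReg [_ [_ [HTS _]]]]]]]].
    destruct (HTS sv) as [T [HsvT HT]].
    assert (HPZ : Def M E (fun e => exists m, E m (e 1) /\ PV (scons m (scons (e 0) (fun k => e (2+k)))))).
    { defv. }
    destruct (sep M E HZ _ HPZ (scons s e0) T) as [Zs HZs].
    assert (HZs' : forall v, E v Zs <-> E v T /\ exists m, E m s /\ V m v) by exact HZs.
    clear HZs HPZ.
    destruct (HReg Zs) as [v [Hv Hvmin]].
    { exists v0. apply HZs'. split; eauto. apply HsvT, Hsv; auto. }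
    apply HZs' in Hv. destruct Hv as [HvT [m [Hm Hmv]]].
    exists m. split; auto. intros u Hu HuA. apply pairA in HuA.
    destruct HuA as [HuN [HmN [vu [vm [H1 [H2 H3]]]]]].
    rewrite (Vfun m vm v HmN H2 Hmv) in H3.
    apply (Hvmin vu H3). apply HZs'. split; eauto. }
  assert (Hext : rel_ext M E A).
  { intros j k Hj Hk Hjk. pose proof (fieldN _ Hj) as HjN. pose proof (fieldN _ Hk) as HkN.
    destruct (Vtot j HjN) as [vj Hvj]. destruct (Vtot k HkN) as [vk Hvk].
    assert (vj = vk).
    { apply (ext M E HZ). intro u. split; intro Hu.
      - destruct (Vdown j vj u HjN Hvj Hu) as [m [HmN Hmu]].
        assert (pair_in M E A m k). { apply Hjk. apply pairA. split; auto. split; auto. eauto. }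
        apply pairA in H. destruct H as [_ [_ [vm [vk' [H1 [H2 H3]]]]]].
        rewrite (Vfun m vm u HmN H1 Hmu) in H3. rewrite (Vfun k vk' vk HkN H2 Hvk) in H3. auto.
      - destruct (Vdown k vk u HkN Hvk Hu) as [m [HmN Hmu]].
        assert (pair_in M E A m j). { apply Hjk. apply pairA. split; auto. split; auto. eauto. }
        apply pairA in H. destruct H as [_ [_ [vm [vj' [H1 [H2 H3]]]]]].
        rewrite (Vfun m vm u HmN H1 Hmu) in H3. rewrite (Vfun j vj' vj HjN H2 Hvj) in H3. auto. }
    subst. apply (Vinj j k vk); auto. }
  destruct HZ as [_ [_ [_ [_ [_ [_ [_ [_ [HMC _]]]]]]]]].
  destruct (HMC A Hrel Hwf Hext) as [X [eta [HXt [[[[HeA [Hetot Hefun]] Heinj] Hesurj] Hiff]]]].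
  assert (etaval : forall n y, pair_in M E eta n y -> in_field M E A n /\ E y X).
  { intros n y [p [Hp Hpair]]. destruct (HeA p Hp) as [n' [y' [Hp' [H1 H2]]]].
    destruct (pair_inj M E HZ _ _ _ _ _ Hpair Hp'). subst. auto. }
  assert (claim : forall n y, in_field M E A n -> pair_in M E eta n y -> V n y).
  { apply NNPP. intro Hneg.
    assert (HPS : Def M E (fun e => in_field M E (e 1) (e 0) /\ exists y, pair_in M E (e 2) (e 0) y /\
       ~ PV (scons (e 0) (scons y (fun k => e (3+k)))))).
    { defv. }
    destruct (sep M E HZ _ HPS (scons A (scons eta e0)) N) as [S HS].
    assert (HS' : forall n, E n S <-> E n N /\ in_field M E A n /\ exists y, pair_in M E eta n y /\ ~ V n y)
      by exact HS.
    clear HS HPS.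
    destruct (Hwf S) as [m [Hm Hmin]].
    { intros u Hu. apply HS' in Hu. tauto. }
    { apply NNPP. intro H. apply Hneg. intros n y Hn Hy. apply NNPP. intro Hny. apply H.
      exists n. apply HS'. split; eauto. }
    apply HS' in Hm. destruct Hm as [HmN [Hmf [y [Hmy HnV]]]].
    destruct (Vtot m HmN) as [vm Hvm].
    apply HnV. replace y with vm; auto.
    apply (ext M E HZ). intro u. split; intro Hu.
    - destruct (Vdown m vm u HmN Hvm Hu) as [k [HkN Hku]].
      assert (HkA : pair_in M E A k m). { apply pairA. split; auto. split; auto. eauto. }
      assert (Hkf : in_field M E A k) by (exists m; auto).
      destruct (Hetot k Hkf) as [yk Hyk].
      assert (V k yk).
      { apply NNPP. intro H. apply (Hmin k); auto. apply HS'. split; auto. split; auto. eauto. }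
      rewrite (Vfun k u yk HkN Hku H). apply (Hiff k m yk y); auto.
    - destruct (etaval m y Hmy) as [_ HyX].
      assert (HuX : E u X) by (apply (HXt y u); auto).
      destruct (Hesurj u HuX) as [j Hj].
      destruct (etaval j u Hj) as [Hjf _].
      assert (HjA : pair_in M E A j m) by (apply (Hiff j m u y); auto).
      assert (V j u).
      { apply NNPP. intro H. apply (Hmin j); auto. apply HS'. split; auto. eauto. }
      apply pairA in HjA. destruct HjA as [HjN [_ [vj [vm' [H1 [H2 H3]]]]]].
      rewrite (Vfun j vj u HjN H1 H) in H3. rewrite (Vfun m vm' vm HmN H2 Hvm) in H3. auto. }
  destruct (ex_empty M E HZ) as [z Hz].
  destruct (ex_single M E HZ z) as [sz Hsz].
  destruct (ex_union2 M E HZ X sz) as [X' HX'].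
  exists X'. intros n v HnN Hnv. apply HX'.
  destruct (classic (exists u, E u v)) as [[u Hu]|Hne].
  - left. destruct (Vdown n v u HnN Hnv Hu) as [m [HmN Hmu]].
    assert (HmA : pair_in M E A m n) by (apply pairA; split; auto; split; auto; eauto).
    assert (Hnf : in_field M E A n) by (exists m; auto).
    destruct (Hetot n Hnf) as [y Hy].
    pose proof (claim n y Hnf Hy). rewrite (Vfun n v y HnN Hnv H).
    apply (etaval n y Hy).
  - right. apply Hsz. apply (empty_eq M E HZ); auto. intros u Hu. apply Hne; eauto.
Qed.
End Collapse.

Section Main.
Variable M : Type.
Variable E : M -> M -> Prop.
Variable phi : formula.

Definition FFe (ee : nat -> M) x y := exists z, sat M E (scons z ee) phi /\ is_pair M E x y z.
Definition sameFe ee x x' := exists y, FFe ee x y /\ FFe ee x' y.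
Definition repe ee g x := forall x' k k', sameFe ee x x' -> pair_in M E g x k ->
  pair_in M E g x' k' -> ~ E k' k.
Definition FinTe ee T x := exists y, FFe ee x y /\ E y T.
Definition PVe (e : nat -> M) := (E (e 0) (e 2) /\ e 1 = e 0) \/
  exists x, E x (e 3) /\ repe (fun k => e (5+k)) (e 4) x /\ ~ FinTe (fun k => e (5+k)) (e 2) x /\
    is_upair M E x (e 2) (e 0) /\ FFe (fun k => e (5+k)) x (e 1).

Lemma def_FF i j (s : nat -> nat) : Def M E (fun e => FFe (fun k => e (s k)) (e i) (e j)).
Proof. unfold FFe. defin. Qed.
Lemma def_sameF i j (s : nat -> nat) : Def M E (fun e => sameFe (fun k => e (s k)) (e i) (e j)).
Proof. unfold sameFe. repeat (cbv beta; first [apply def_FF | defin0]). Qed.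
Lemma def_rep i j (s : nat -> nat) : Def M E (fun e => repe (fun k => e (s k)) (e i) (e j)).
Proof. unfold repe. repeat (cbv beta; first [apply def_sameF | defin0]). Qed.
Lemma def_FinT i j (s : nat -> nat) : Def M E (fun e => FinTe (fun k => e (s k)) (e i) (e j)).
Proof. unfold FinTe. repeat (cbv beta; first [apply def_FF | defin0]). Qed.
Lemma def_PVe : Def M E PVe.
Proof. unfold PVe.
  repeat (cbv beta; first [apply def_FF | apply def_rep | apply def_FinT | defin0]). Qed.

End Main.

Ltac defm := repeat (cbv beta; first [apply def_FF | apply def_sameF | apply def_rep | apply def_FinT | defin0]).

Theorem lemma9p5 :
  forall (M : Type) (E : M -> M -> Prop),
    Z_FTM_omega M E ->
    forall (phi : formula) (env : nat -> M),
      let F := class_of M E phi env in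
      is_class_function M E F ->
      is_set_class M E (cdom M E F) ->
      ( (forall y u, crange M E F y -> E u y -> crange M E F u)
        \/ (exists Y, forall y, crange M E F y -> subset M E y Y) ) ->
      is_set_class M E F /\ is_set_class M E (crange M E F).
Proof.
  intros M E HZ phi env F [HCF1 HCF2] [D HD] Hcase.
  unfold F, class_of in *. clear F.
  pose (FF := FFe M E phi env).
  assert (HD' : forall x, E x D <-> exists y, FF x y).
  { intro x. rewrite (HD x). unfold cdom, FF, FFe. split.
    - intros [y [z H]]. eauto.
    - intros [y [z H]]. eauto. }
  clear HD.
  assert (Hcr : forall y, crange M E (fun z => sat M E (scons z env) phi) y <-> exists x, FF x y).
  { intro y. unfold crange, FF, FFe. split.
    - intros [x [z H]]; eauto.
    - intros [x [z H]]; eauto. }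
  assert (FFfun : forall x y1 y2, FF x y1 -> FF x y2 -> y1 = y2).
  { intros x y1 y2 [z1 [H1 H1']] [z2 [H2 H2']]. apply (HCF2 z1 z2 x y1 y2); auto. }
  assert (HTex : exists T, transitive M E T /\
     forall x y u, FF x y -> E u y -> E u T \/ exists x', FF x' u).
  { destruct Hcase as [H|[Y HY]].
    - destruct (ex_empty M E HZ) as [z Hz]. exists z. split.
      + intros y u Hy. destruct (Hz y Hy).
      + intros x y u Hxy Hu. right. apply Hcr. apply (H y); auto. apply Hcr; eauto.
    - destruct HZ as [_ [_ [_ [_ [_ [_ [_ [HTS _]]]]]]]].
      destruct (HTS Y) as [T [HYT HT]]. exists T. split; auto.
      intros x y u Hxy Hu. left. apply HYT. apply (HY y); auto. apply Hcr; eauto. }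
  destruct HTex as [T [HT Hcov]].
  destruct (ex_omega M E HZ) as [w Hw].
  pose proof HZ as HZ2. destruct HZ2 as [_ [_ [_ [_ [_ [_ [_ [_ [_ HCount]]]]]]]]].
  destruct (HCount D w Hw) as [g [[HgA [Hgtot Hgfun]] Hginj]].
  assert (gval : forall x k, pair_in M E g x k -> E k w).
  { intros x k [p [Hp Hpair]]. destruct (HgA p Hp) as [x' [k' [Hp' [_ Hk']]]].
    destruct (pair_inj M E HZ _ _ _ _ _ Hpair Hp'). subst. auto. }
  pose (sameF := sameFe M E phi env).
  pose (rep := repe M E phi env g).
  pose (FinT := FinTe M E phi env T).
  assert (rep_ex : forall x, E x D -> exists x', E x' D /\ sameF x x' /\ rep x').
  { intros x Hx.
    assert (HP : Def M E (fun e => exists x', E x' (e 1) /\ sameFe M E phi (fun k => e (4+k)) (e 2) x'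
        /\ pair_in M E (e 3) x' (e 0))) by defm.
    destruct (sep M E HZ _ HP (scons D (scons x (scons g env))) w) as [S HS].
    assert (HS' : forall k, E k S <-> E k w /\ exists x', E x' D /\ sameF x x' /\ pair_in M E g x' k)
      by exact HS.
    clear HS HP.
    pose proof HZ as HZ2. destruct HZ2 as [_ [_ [_ [_ [HReg _]]]]].
    destruct (HReg S) as [k0 [Hk0 Hmin]].
    { destruct (Hgtot x Hx) as [k Hk]. exists k. apply HS'. split; eauto.
      exists x. split; auto. split; auto. destruct (proj1 (HD' x) Hx) as [y Hy]. exists y; auto. }
    apply HS' in Hk0. destruct Hk0 as [_ [x0 [Hx0 [Hsx0 Hgx0]]]].
    exists x0. split; auto. split; auto.
    intros x' k k' Hs Hk Hk' Hin.
    rewrite (Hgfun x0 k k0 Hk Hgx0) in Hin.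
    apply (Hmin k' Hin). apply HS'. split; [eapply gval; eauto|].
    exists x'. split.
    - apply HD'. destruct Hs as [y [_ Hy]]. eauto.
    - split; auto. destruct Hsx0 as [y [H1 H2]]. destruct Hs as [y' [H3 H4]].
      exists y. split; auto. rewrite (FFfun x0 y y' H2 H3). auto. }
  assert (rep_un : forall x1 x2, E x1 D -> E x2 D -> rep x1 -> rep x2 -> sameF x1 x2 -> x1 = x2).
  { intros x1 x2 H1 H2 R1 R2 Hs.
    destruct (Hgtot x1 H1) as [k1 Hk1]. destruct (Hgtot x2 H2) as [k2 Hk2].
    assert (Hs' : sameF x2 x1) by (destruct Hs as [y [Ha Hb]]; exists y; auto).
    destruct (om_tri M E HZ w Hw k1 k2 (gval _ _ Hk1) (gval _ _ Hk2)) as [H|[H|H]].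
    - destruct (R1 x2 k1 k2 Hs Hk1 Hk2 H).
    - rewrite H in Hk2. apply (Hginj x1 x2 k1); auto.
    - destruct (R2 x1 k2 k1 Hs' Hk2 Hk1 H). }

  destruct (ex_union2 M E HZ T D) as [U1 HU1].
  destruct (ex_single M E HZ T) as [sT HsT].
  destruct (ex_union2 M E HZ U1 sT) as [U HU].
  destruct (ex_pclosed M E HZ U) as [Y [HUY HY]].
  assert (TY : forall t, E t T -> E t Y) by (intros t Ht; apply HUY, HU; left; apply HU1; auto).
  assert (DY : forall x, E x D -> E x Y) by (intros x Hx; apply HUY, HU; left; apply HU1; auto).
  assert (TinY : E T Y) by (apply HUY, HU; right; apply HsT; auto).
  pose (e0 := scons T (scons D (scons g env))).
  pose (Vc := fun n v => (E n T /\ v = n) \/ exists x, E x D /\ rep x /\ ~ FinT x /\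
     is_upair M E x T n /\ FF x v).
  assert (HVV : forall n v, V M (PVe M E phi) e0 n v <-> Vc n v).
  { intros n v. split; intro H; exact H. }
  assert (HPN : Def M E (fun e => exists v, PVe M E phi (scons (e 0) (scons v (fun k => e (S k)))))).
  { repeat (cbv beta; first [apply (def_V2 M E (PVe M E phi) _ _ _ (def_PVe M E phi)) | defin0]). }
  destruct (sep M E HZ _ HPN e0 Y) as [N HN].
  assert (HN' : forall n, E n N <-> E n Y /\ exists v, Vc n v).
  { intro n. rewrite (HN n). split; intros [H1 [v H2]]; split; auto; exists v; exact H2. }
  clear HN HPN.
  assert (nodeT : forall u, E u T -> E u N /\ Vc u u).
  { intros u Hu. assert (Vc u u) by (left; auto). split; auto. apply HN'. split; eauto. }
  assert (cover : forall x y, E x D -> FF x y -> exists m, E m N /\ Vc m y).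
  { intros x y Hx Hxy. destruct (rep_ex x Hx) as [x2 [Hx2 [[y' [H1 H2]] Hr2]]].
    rewrite <- (FFfun x y y' Hxy H1) in H2.
    destruct (classic (E y T)) as [HyT|HyT].
    - exists y. apply nodeT; auto.
    - assert (~ FinT x2).
      { intros [y'' [H3 H4]]. rewrite (FFfun x2 y'' y H3 H2) in H4. auto. }
      destruct (ex_upair M E HZ x2 T) as [m Hm].
      assert (Vc m y) by (right; exists x2; auto 6).
      exists m. split; auto. apply HN'. split; eauto. }
  destruct (collapse M E HZ (PVe M E phi) (def_PVe M E phi) e0 N) as [X HX].
  - intros n Hn. apply HN' in Hn. destruct Hn as [_ [v Hv]]. exists v. apply HVV. auto.
  - intros n v1 v2 Hn H1 H2. pose proof (proj1 (HVV _ _) H1) as H1'; clear H1; unfold Vc in H1'; rename H1' into H1.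
    pose proof (proj1 (HVV _ _) H2) as H2'; clear H2; unfold Vc in H2'; rename H2' into H2.
   
    destruct H1 as [[H1 ->]|[x1 [Hx1 [Hr1 [Hf1 [Hu1 HF1]]]]]];
    destruct H2 as [[H2 ->]|[x2 [Hx2 [Hr2 [Hf2 [Hu2 HF2]]]]]]; auto.
    + exfalso. apply (not_self M E HZ T). apply (HT n T); auto. apply Hu2; auto.
    + exfalso. apply (not_self M E HZ T). apply (HT n T); auto. apply Hu1; auto.
    + rewrite (upair_inj M E x1 x2 T n Hu1 Hu2) in HF1. apply (FFfun x2); auto.
  - intros n1 n2 v Hn1 Hn2 H1 H2. pose proof (proj1 (HVV _ _) H1) as H1'; clear H1; unfold Vc in H1'; rename H1' into H1.
    pose proof (proj1 (HVV _ _) H2) as H2'; clear H2; unfold Vc in H2'; rename H2' into H2.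
   
    destruct H1 as [[H1 ->]|[x1 [Hx1 [Hr1 [Hf1 [Hu1 HF1]]]]]];
    destruct H2 as [[H2 Hv2]|[x2 [Hx2 [Hr2 [Hf2 [Hu2 HF2]]]]]]; auto.
    + exfalso. apply Hf2. exists n1. auto.
    + exfalso. subst v. apply Hf1. exists n2. auto.
    + assert (x1 = x2) by (apply rep_un; auto; exists v; auto). subst x2.
      apply (upair_eq M E HZ x1 T); auto.
  - intros n v u Hn Hv Hu. pose proof (proj1 (HVV _ _) Hv) as Hv'; clear Hv; unfold Vc in Hv'; rename Hv' into Hv.
    assert (HuTcase : E u T -> exists m, E m N /\ V M (PVe M E phi) e0 m u).
    { intros HuT. exists u. split; [apply nodeT; auto|]. apply HVV. apply nodeT; auto. }
    destruct Hv as [[HnT ->]|[x [Hx [Hr [Hf [Hun HF]]]]]].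
    + apply HuTcase. apply (HT n u); auto.
    + destruct (Hcov x v u HF Hu) as [HuT|[x' Hx']]; auto.
      assert (Hx'D : E x' D) by (apply HD'; eauto).
      destruct (cover x' u Hx'D Hx') as [m [Hm Hmu]].
      exists m. split; [exact Hm|apply HVV; exact Hmu].
  - assert (HPR : Def M E (fun e => exists x, FFe M E phi (fun k => e (1+k)) x (e 0))) by defm.
    destruct (sep M E HZ _ HPR env X) as [Rs HRs].
    assert (HRs' : forall y, E y Rs <-> crange M E (fun z => sat M E (scons z env) phi) y).
    { intro y. rewrite (HRs y), (Hcr y). split.
      - intros [_ H]. exact H.
      - intros H. split; [|exact H]. destruct H as [x Hx].
        assert (HxD : E x D) by (apply HD'; eauto).
        destruct (cover x y HxD Hx) as [m [Hm Hmy]].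
        apply (HX m y); [exact Hm|apply HVV; exact Hmy]. }
    clear HRs HPR.
    split; [|exists Rs; exact HRs'].
    destruct (ex_union2 M E HZ D Rs) as [U2 HU2].
    destruct (ex_pclosed M E HZ U2) as [Y2 [HUY2 HY2]].
    assert (HPF : Def M E (fun e => sat M E (scons (e 0) (fun k => e (1+k))) phi)) by apply def_sat.
    destruct (sep M E HZ _ HPF env Y2) as [Fs HFs].
    exists Fs. intro p. rewrite (HFs p). split; [intros [_ H]; exact H|].
    intro Hp. split; [|exact Hp].
    destruct (HCF1 p Hp) as [x [y Hpair]].
    apply (pclosed_pair M E HZ Y2 HY2 x y); auto.
    + apply HUY2, HU2. left. apply HD'. exists y. exists p. auto.
    + apply HUY2, HU2. right. apply HRs'. exists x, p. auto.
Qed.
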